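(* Let $d\in\mathbb{N}$ with $d\ge1$ and $\mathbf d\in\mathbb{N}^2\setminus\{(0,0)\}$. Every $\alpha\in E_d\setminus\{0\}$ admits a representation $\mathbf i=(i_1,\dots,i_s)$ with $d(\mathbf i)\le d$, $s=s_d(\alpha)$ and $i_s\le i_1+2$. Similarly, every $\alpha\in E_{\mathbf d}\setminus\{0\}$ admits a representation $\mathbf i=(i_1,\dots,i_s)$ with $(d_1(\mathbf i),d_2(\mathbf i))\le\mathbf d$ (componentwise), $s=s_{\mathbf d}(\alpha)$ and $i_s\le i_1+2$.
   Context: Let $f\colon\mathbb{Z}\to\mathbb{Z}$ be defined by $f(0)=f(1)=1$, $f(i+2)=f(i+1)+f(i)$ for all $i\in\mathbb{Z}$; $\gamma=(1+\sqrt5)/2$; $\mathbb{Z}[\gamma]=\mathbb{Z}\oplus\mathbb{Z}\gamma^{-1}$. A representation of $\alpha\in\mathbb{Z}[\gamma]$ is a finite non-decreasing sequence $\mathbf i=(i_1,\dots,i_s)$ of non-negative integers with $\alpha=\sum_k\gamma^{-i_k}$ (empty sum $=0$); $d(\mathbf i)=\sum_kf(i_k)$, $d_1(\mathbf i)=\sum_kf(i_k-2)$, $d_2(\mathbf i)=\sum_kf(i_k-1)$. $E_d$ is the set of $\alpha$ having a representation $\mathbf i$ with $d(\mathbf i)\le d$, and $s_d(\alpha)$ the largest size $s$ of such a representation; $E_{\mathbf d}$ is the set of $\alpha$ having a representation with $(d_1(\mathbf i),d_2(\mathbf i))\le\mathbf d$ componentwise, and $s_{\mathbf d}(\alpha)$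 the largest size of such a representation. *)

(* Defs.v *)
From Stdlib Require Import ZArith List Sorted Lia.
Import ListNotations.
Open Scope Z_scope.

(* f : Z -> Z with f(0)=f(1)=1 and f(i+2)=f(i+1)+f(i) for all i in Z. *)
Fixpoint fpos (n : nat) : Z * Z :=  (* (f n, f (n+1)) *)
  match n with
  | O => (1, 1)
  | S m => let (a, b) := fpos m in (b, a + b)
  end.
Fixpoint fneg (n : nat) : Z * Z :=  (* (f (-n), f (-n+1)) *)
  match n with
  | O => (1, 1)
  | S m => let (a, b) := fneg m in (b - a, a)
  end.
Definition f (z : Z) : Z :=
  if 0 <=? z then fst (fpos (Z.to_nat z)) else fst (fneg (Z.to_nat (- z))).

(* Z[gamma] = Z (+) Z gamma^{-1}; an element (a,b) stands for a + b*gamma^{-1}.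
   Since gamma^{-2} = 1 - gamma^{-1}, multiplication by gamma^{-1} sends
   (a,b) to (b, a - b). *)
Definition Zg := (Z * Z)%type.
Definition Zg0 : Zg := (0, 0).
Definition Zg_add (x y : Zg) : Zg := (fst x + fst y, snd x + snd y).
Fixpoint ginv_pow (i : nat) : Zg :=
  match i with
  | O => (1, 0)
  | S j => let (a, b) := ginv_pow j in (b, a - b)
  end.

Definition val (l : list nat) : Zg :=
  fold_right (fun i acc => Zg_add (ginv_pow i) acc) Zg0 l.

Definition is_rep (alpha : Zg) (l : list nat) : Prop :=
  Sorted le l /\ val l = alpha.

Definition dsum (g : Z -> Z) (l : list nat) : Z :=
  fold_right (fun i acc => g (Z.of_nat i) + acc) 0 l.
Definition d0 (l : list nat) : Z := dsum f l.
Definition d1 (l : list nat) : Z := dsum (fun i => f (i - 2)) l.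
Definition d2 (l : list nat) : Z := dsum (fun i => f (i - 1)) l.

Definition in_E (d : nat) (alpha : Zg) : Prop :=
  exists l, is_rep alpha l /\ d0 l <= Z.of_nat d.
Definition in_E2 (e1 e2 : nat) (alpha : Zg) : Prop :=
  exists l, is_rep alpha l /\ d1 l <= Z.of_nat e1 /\ d2 l <= Z.of_nat e2.

(* l has size s_d(alpha): it is admissible and of largest size among admissible reps *)
Definition has_size_sd (d : nat) (alpha : Zg) (l : list nat) : Prop :=
  forall l', is_rep alpha l' -> d0 l' <= Z.of_nat d -> (length l' <= length l)%nat.
Definition has_size_sd2 (e1 e2 : nat) (alpha : Zg) (l : list nat) : Prop :=
  forall l', is_rep alpha l' -> d1 l' <= Z.of_nat e1 -> d2 l' <= Z.of_nat e2 ->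
    (length l' <= length l)%nat.

Definition spread_le2 (l : list nat) : Prop :=
  (last l 0%nat <= hd 0%nat l + 2)%nat.

(* Main.v *)
Require Import Defs.
From Stdlib Require Import ZArith List Sorted Lia Permutation Mergesort Classical.
Import ListNotations.
Open Scope Z_scope.

Lemma fpos_S n : fpos (S n) = (snd (fpos n), fst (fpos n) + snd (fpos n)).
Proof. simpl. destruct (fpos n); reflexivity. Qed.
Lemma fneg_S n : fneg (S n) = (snd (fneg n) - fst (fneg n), fst (fneg n)).
Proof. simpl. destruct (fneg n); reflexivity. Qed.

Lemma fpos_pos n : 1 <= fst (fpos n) /\ 1 <= snd (fpos n).
Proof. induction n; [simpl; lia|]. rewrite fpos_S; simpl; lia. Qed.

Lemma f_nat n : f (Z.of_nat n) = fst (fpos n).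
Proof. unfold f. rewrite Nat2Z.id. destruct (0 <=? Z.of_nat n) eqn:E; [reflexivity|].
  apply Z.leb_gt in E; lia. Qed.
Lemma f_negn n : f (- Z.of_nat (S n)) = fst (fneg (S n)).
Proof. unfold f. destruct (0 <=? - Z.of_nat (S n)) eqn:E.
  - apply Z.leb_le in E; lia.
  - f_equal. f_equal. lia. Qed.

Lemma f_rec z : f (z + 2) = f (z + 1) + f z.
Proof.
  destruct (Z_le_gt_dec 0 z) as [H|H].
  - destruct (Z_of_nat_complete z H) as [n ->].
    replace (Z.of_nat n + 2) with (Z.of_nat (S (S n))) by lia.
    replace (Z.of_nat n + 1) with (Z.of_nat (S n)) by lia.
    rewrite !f_nat. rewrite !fpos_S. simpl. lia.
  - destruct (Z.eq_dec z (-1)) as [->|Hz].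
    + reflexivity.
    + assert (exists n, z = - Z.of_nat (S (S n))) as [n ->].
      { exists (Z.to_nat (- z - 2)). lia. }
      destruct n as [|n].
      * reflexivity.
      * replace (- Z.of_nat (S (S (S n))) + 2) with (- Z.of_nat (S n)) by lia.
        replace (- Z.of_nat (S (S (S n))) + 1) with (- Z.of_nat (S (S n))) by lia.
        rewrite !f_negn. rewrite (fneg_S (S (S n))), (fneg_S (S n)). simpl. lia.
Qed.

Lemma f_ge1 z : 0 <= z -> 1 <= f z.
Proof. intro H. destruct (Z_of_nat_complete z H) as [n ->]. rewrite f_nat.
  apply fpos_pos. Qed.
Lemma f_ge0 z : -2 <= z -> 0 <= f z.
Proof. intro H. destruct (Z_le_gt_dec 0 z). - pose proof (f_ge1 z); lia.
  - assert (z = -1 \/ z = -2) as [->| ->] by lia; compute; congruence. Qed.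

Lemma g_rec i : ginv_pow i = Zg_add (ginv_pow (S i)) (ginv_pow (S (S i))).
Proof. simpl. destruct (ginv_pow i) as [a b]. unfold Zg_add; simpl. f_equal; lia. Qed.

Lemma val_cons i l : val (i :: l) = Zg_add (ginv_pow i) (val l).
Proof. reflexivity. Qed.
Lemma Zg_add_comm x y : Zg_add x y = Zg_add y x.
Proof. unfold Zg_add. f_equal; lia. Qed.
Lemma Zg_add_assoc x y z : Zg_add x (Zg_add y z) = Zg_add (Zg_add x y) z.
Proof. unfold Zg_add. simpl. f_equal; lia. Qed.
Lemma val_app l m : val (l ++ m) = Zg_add (val l) (val m).
Proof. induction l; simpl. - destruct (val m); unfold Zg_add; simpl; f_equal.
  - rewrite IHl. apply Zg_add_assoc. Qed.
Lemma val_perm l m : Permutation l m -> val l = val m.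
Proof. induction 1; simpl; try congruence.
  rewrite !Zg_add_assoc, (Zg_add_comm (ginv_pow y)). reflexivity. Qed.

Lemma dsum_cons h i l : dsum h (i :: l) = h (Z.of_nat i) + dsum h l.
Proof. reflexivity. Qed.
Lemma dsum_app h l m : dsum h (l ++ m) = dsum h l + dsum h m.
Proof. induction l; simpl; lia. Qed.
Lemma dsum_perm h l m : Permutation l m -> dsum h l = dsum h m.
Proof. induction 1; simpl; lia. Qed.

Definition recf (h : Z -> Z) := forall z, h (z + 2) = h (z + 1) + h z.

Lemma odd_move (j : nat) : forall a : nat, exists m,
  length m = (j + 2)%nat /\
  val m = Zg_add (ginv_pow a) (ginv_pow (a + 2 * j + 3)) /\
  forall h, recf h -> dsum h m + h (Z.of_nat a) = h (Z.of_nat (a + 2*j+3)).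
Proof.
  induction j as [|j IH]; intro a.
  - exists [S a; S a]. split; [reflexivity|]. split.
    + rewrite !val_cons. simpl val.
      rewrite (g_rec a), (g_rec (S a)).
      replace (a + 2 * 0 + 3)%nat with (S (S (S a))) by lia.
      destruct (ginv_pow (S a)), (ginv_pow (S (S a))), (ginv_pow (S (S (S a)))).
      unfold Zg_add; simpl; f_equal; lia.
    + intros h Hh. rewrite !dsum_cons. simpl dsum.
      replace (Z.of_nat (a + 2 * 0 + 3)) with (Z.of_nat a + 1 + 2) by lia.
      rewrite Hh. replace (Z.of_nat a + 1 + 1) with (Z.of_nat a + 2) by lia.
      rewrite Hh. replace (Z.of_nat (S a)) with (Z.of_nat a + 1) by lia. lia.
  - destruct (IH (S (S a))) as [m [Hl [Hv Hd]]].
    exists (S a :: m). split; [simpl; lia|]. split.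
    + rewrite val_cons, Hv.
      replace (S (S a) + 2 * j + 3)%nat with (a + 2 * S j + 3)%nat by lia.
      rewrite (g_rec a).
      destruct (ginv_pow (S a)), (ginv_pow (S (S a))), (ginv_pow (a + 2 * S j + 3)).
      unfold Zg_add; simpl; f_equal; lia.
    + intros h Hh. rewrite dsum_cons. specialize (Hd h Hh).
      replace (S (S a) + 2 * j + 3)%nat with (a + 2 * S j + 3)%nat in Hd by lia.
      replace (Z.of_nat (S (S a))) with (Z.of_nat a + 2) in Hd by lia.
      rewrite Hh in Hd. replace (Z.of_nat (S a)) with (Z.of_nat a + 1) by lia. lia.
Qed.

Lemma pair_move (a k : nat) : (3 <= k)%nat -> exists m c,
  val m = Zg_add (ginv_pow a) (ginv_pow (a + k)) /\
  (c = 0 \/ c = 2) /\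
  (forall h, recf h -> dsum h m + c * h (Z.of_nat a) = h (Z.of_nat a) + h (Z.of_nat (a + k))) /\
  ((3 <= length m)%nat \/ (length m = 2%nat /\ c = 2)).
Proof.
  intro Hk. destruct (Nat.Even_or_Odd k) as [[j Hj]|[j Hj]].
  - (* k = 2j, j >= 2: gap 2(j-2)+4 *)
    destruct (odd_move (j - 2) (S a)) as [m [Hl [Hv Hd]]].
    exists (S (S a) :: m), 0. split; [|split; [auto|split]].
    + rewrite val_cons, Hv. replace (S a + 2 * (j - 2) + 3)%nat with (a + k)%nat by lia.
      rewrite (g_rec a). destruct (ginv_pow (S a)), (ginv_pow (S (S a))), (ginv_pow (a + k)).
      unfold Zg_add; simpl; f_equal; lia.
    + intros h Hh. rewrite dsum_cons. specialize (Hd h Hh).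
      replace (S a + 2 * (j - 2) + 3)%nat with (a + k)%nat in Hd by lia.
      replace (Z.of_nat (S (S a))) with (Z.of_nat a + 2) by lia. rewrite Hh.
      replace (Z.of_nat (S a)) with (Z.of_nat a + 1) in Hd by lia. lia.
    + left. simpl. lia.
  - destruct (odd_move (j - 1) a) as [m [Hl [Hv Hd]]].
    exists m, 2. split; [|split; [auto|split]].
    + rewrite Hv. f_equal. f_equal. lia.
    + intros h Hh. specialize (Hd h Hh).
      replace (a + 2 * (j - 1) + 3)%nat with (a + k)%nat in Hd by lia. lia.
    + destruct j as [|[|j]]; [lia| right; split; [simpl in Hl; lia|reflexivity] | left; lia].
Qed.

Lemma sort_sorted l : Sorted le (NatSort.sort l).
Proof.
  pose proof (NatSort.LocallySorted_sort l) as H.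
  apply Sorted_LocallySorted_iff in H.
  induction H; constructor; auto.
  destruct H0; constructor. apply Nat.leb_le. exact H0.
Qed.

Lemma max_exists (Q : nat -> Prop) (N : nat) :
  (forall n, Q n -> (n <= N)%nat) -> forall n0, Q n0 ->
  exists n, Q n /\ forall m, Q m -> (m <= n)%nat.
Proof.
  intros HN. assert (forall K n, Q n -> (N <= n + K)%nat ->
     exists n, Q n /\ forall m, Q m -> (m <= n)%nat).
  { induction K; intros n Hn HK.
    - exists n. split; auto. intros m Hm. specialize (HN m Hm). lia.
    - destruct (classic (exists m, Q m /\ (n < m)%nat)) as [[m [Hm Hlt]]|Hno].
      + apply (IHK m Hm). lia.
      + exists n. split; auto. intros m Hm. destruct (Nat.le_gt_cases m n); auto.
        exfalso. apply Hno. eauto. }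
  intros n0 H0. apply (H N n0 H0). lia.
Qed.

Lemma generic (P : list nat -> Prop) (mu : list nat -> nat) (N : nat) :
  (forall l l', Permutation l l' -> P l -> P l') ->
  (forall l l', Permutation l l' -> mu l = mu l') ->
  (forall l, P l -> (length l <= N)%nat) ->
  (forall a k mid, (3 <= k)%nat -> P (a :: mid ++ [(a + k)%nat]) ->
     exists l', P l' /\ ((length (a :: mid ++ [(a+k)%nat]) < length l')%nat \/
        (length l' = length (a :: mid ++ [(a+k)%nat]) /\ (mu l' < mu (a :: mid ++ [(a+k)%nat]))%nat))) ->
  forall l0, P l0 ->
  exists l, Sorted le l /\ P l /\ (forall l', P l' -> (length l' <= length l)%nat) /\
    spread_le2 l.
Proof.
  intros Hp Hmu HN Himp l0 H0.
  destruct (max_exists (fun n => exists l, P l /\ length l = n) N) with (n0 := length l0)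
    as [s [[l1 [Hl1 Hs]] Hmax]].
  { intros n [l [Hl <-]]. auto. }
  { eauto. }
  assert (Hmx : forall l', P l' -> (length l' <= length l1)%nat).
  { intros l' H'. rewrite Hs. apply Hmax. eauto. }
  clear Hmax Hs H0 l0.
  assert (forall n l, (mu l <= n)%nat -> P l -> (length l = length l1) ->
     exists l, Sorted le l /\ P l /\ (forall l', P l' -> (length l' <= length l)%nat) /\
    spread_le2 l).
  2:{ eapply H; eauto. }
  induction n; intros l Hmul Hl Hlen.
  all: set (ls := NatSort.sort l); pose proof (NatSort.Permuted_sort l) as Hperm;
    fold ls in Hperm;
    assert (Hls : P ls) by (eapply Hp; eauto);
    assert (Hlenls : length ls = length l1) by (rewrite <- (Permutation_length Hperm); auto);
    assert (Hmuls : mu ls = mu l) by (symmetry; apply Hmu; auto).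
  all: destruct (classic (spread_le2 ls)) as [Hsp|Hsp];
    [exists ls; split; [apply sort_sorted|split; [auto|split; [intros; rewrite Hlenls; auto|auto]]]|].
  all: destruct ls as [|a rest] eqn:Els; [exfalso; apply Hsp; unfold spread_le2; simpl; lia|].
  all: destruct (exists_last (l := rest)) as [mid [b Eb]];
    [intro E; subst rest; apply Hsp; unfold spread_le2; simpl; lia|].
  all: subst rest; unfold spread_le2 in Hsp; simpl hd in Hsp;
    change (a :: mid ++ [b]) with ((a :: mid) ++ [b]) in Hsp; rewrite last_last in Hsp.
  all: assert (Hsorted : Sorted le (a :: mid ++ [b])) by (rewrite <- Els; apply sort_sorted).
  all: assert (Hab : (a <= b)%nat) by
      (apply Sorted_StronglySorted in Hsorted; [|intros x y z; lia];
       inversion Hsorted; subst; rewrite Forall_forall in *; apply H2; apply in_or_app; right; left; auto).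
  all: replace b with (a + (b - a))%nat in * by lia.
  all: destruct (Himp a (b - a)%nat mid ltac:(lia) Hls) as [l' [Hl' [Hgt|[Heq Hlt]]]];
    [exfalso; specialize (Hmx l' Hl'); rewrite <- Hlenls in Hmx; lia| ].
  - lia.
  - apply (IHn l'); auto; try lia.
Qed.

Lemma recf_f : recf f.
Proof. intro z. apply f_rec. Qed.
Lemma recf_f1 : recf (fun z => f (z - 1)).
Proof. intro z. replace (z + 2 - 1) with ((z - 1) + 2) by lia.
  replace (z + 1 - 1) with ((z - 1) + 1) by lia. apply f_rec. Qed.
Lemma recf_f2 : recf (fun z => f (z - 2)).
Proof. intro z. replace (z + 2 - 2) with ((z - 2) + 2) by lia.
  replace (z + 1 - 2) with ((z - 2) + 1) by lia. apply f_rec. Qed.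

Lemma d0_len l : Z.of_nat (length l) <= d0 l.
Proof. induction l; unfold d0 in *; simpl; [lia|].
  pose proof (f_ge1 (Z.of_nat a)). lia. Qed.
Lemma d12 l : d1 l + d2 l = d0 l.
Proof. induction l; unfold d0, d1, d2 in *; simpl; [lia|].
  pose proof (f_rec (Z.of_nat a - 2)).
  replace (Z.of_nat a - 2 + 2) with (Z.of_nat a) in H by lia.
  replace (Z.of_nat a - 2 + 1) with (Z.of_nat a - 1) in H by lia. lia. Qed.

Lemma improve a k mid : (3 <= k)%nat -> exists l' c,
  val l' = val (a :: mid ++ [(a + k)%nat]) /\ (c = 0 \/ c = 2) /\
  (forall h, recf h -> dsum h l' + c * h (Z.of_nat a) = dsum h (a :: mid ++ [(a + k)%nat])) /\
  ((length (a :: mid ++ [(a+k)%nat]) < length l')%nat \/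
     (length l' = length (a :: mid ++ [(a+k)%nat]) /\ c = 2)).
Proof.
  intro Hk. destruct (pair_move a k Hk) as [m [c [Hv [Hc [Hd Hlen]]]]].
  exists (mid ++ m), c. split; [|split; [auto|split]].
  - rewrite val_cons, !val_app, Hv. simpl val.
    destruct (ginv_pow a), (ginv_pow (a+k)), (val mid). unfold Zg_add, Zg0; simpl; f_equal; lia.
  - intros h Hh. rewrite dsum_cons, !dsum_app. specialize (Hd h Hh). simpl dsum. lia.
  - rewrite length_app. simpl. rewrite length_app. simpl. lia.
Qed.

Theorem mainTheorem15 :
  (forall (d : nat) (alpha : Zg), (1 <= d)%nat ->
     in_E d alpha -> alpha <> Zg0 ->
     exists l, is_rep alpha l /\ (d0 l <= Z.of_nat d)%Z /\
               has_size_sd d alpha l /\ spread_le2 l)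
  /\
  (forall (e1 e2 : nat) (alpha : Zg), (e1, e2) <> (0%nat, 0%nat) ->
     in_E2 e1 e2 alpha -> alpha <> Zg0 ->
     exists l, is_rep alpha l /\ (d1 l <= Z.of_nat e1)%Z /\ (d2 l <= Z.of_nat e2)%Z /\
               has_size_sd2 e1 e2 alpha l /\ spread_le2 l).
Proof.
  split.
  - intros d alpha _ [l0 [[_ Hv0] Hd0]] _.
    destruct (generic (fun l => val l = alpha /\ d0 l <= Z.of_nat d)
                (fun l => Z.to_nat (d0 l)) d) with (l0 := l0)
      as [l [Hs [[Hv Hd] [Hmax Hsp]]]].
    + intros l l' Hp [H1 H2]. split; [rewrite <- (val_perm _ _ Hp); auto|].
      unfold d0 in *. rewrite <- (dsum_perm _ _ _ Hp). auto.
    + intros l l' Hp. unfold d0. rewrite (dsum_perm _ _ _ Hp). auto.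
    + intros l [_ H]. pose proof (d0_len l). lia.
    + intros a k mid Hk [Hv Hd].
      destruct (improve a k mid Hk) as [l' [c [Hv' [Hc [Hd' Hl']]]]].
      exists l'. pose proof (Hd' f recf_f) as E. fold (d0 l') in E.
      fold (d0 (a :: mid ++ [(a + k)%nat])) in E.
      pose proof (f_ge1 (Z.of_nat a) ltac:(lia)). pose proof (d0_len l').
      split; [split; [congruence|lia]|].
      destruct Hl' as [Hl'|[Hl' ->]]; [left; auto|right; split; auto; lia].
    + auto.
    + exists l. split; [split; auto|split; [auto|split; [|auto]]].
      intros l' [_ Hv'] Hd'. apply Hmax. auto.
  - intros e1 e2 alpha _ [l0 [[_ Hv0] [H10 H20]]] _.
    destruct (generic (fun l => val l = alpha /\ d1 l <= Z.of_nat e1 /\ d2 l <= Z.of_nat e2)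
                (fun l => Z.to_nat (d0 l)) (e1 + e2)) with (l0 := l0)
      as [l [Hs [[Hv [H1 H2]] [Hmax Hsp]]]].
    + intros l l' Hp [H1 [H2 H3]]. split; [rewrite <- (val_perm _ _ Hp); auto|].
      unfold d1, d2 in *. rewrite <- !(dsum_perm _ _ _ Hp). auto.
    + intros l l' Hp. unfold d0. rewrite (dsum_perm _ _ _ Hp). auto.
    + intros l [_ [H1 H2]]. pose proof (d0_len l). pose proof (d12 l). lia.
    + intros a k mid Hk [Hv [H1 H2]].
      destruct (improve a k mid Hk) as [l' [c [Hv' [Hc [Hd' Hl']]]]].
      exists l'. pose proof (Hd' f recf_f) as E. fold (d0 l') in E.
      fold (d0 (a :: mid ++ [(a + k)%nat])) in E.
      pose proof (Hd' _ recf_f1) as E1. fold (d2 l') in E1.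
      fold (d2 (a :: mid ++ [(a + k)%nat])) in E1.
      pose proof (Hd' _ recf_f2) as E2. fold (d1 l') in E2.
      fold (d1 (a :: mid ++ [(a + k)%nat])) in E2.
      pose proof (f_ge1 (Z.of_nat a) ltac:(lia)). pose proof (d0_len l').
      pose proof (f_ge0 (Z.of_nat a - 1) ltac:(lia)).
      pose proof (f_ge0 (Z.of_nat a - 2) ltac:(lia)).
      split; [split; [congruence|destruct Hc; subst c; split; lia]|].
      destruct Hl' as [Hl'|[Hl' ->]]; [left; auto|right; split; auto; lia].
    + auto.
    + exists l. split; [split; auto|split; [auto|split; [auto|split; [|auto]]]].
      intros l' [_ Hv'] H1' H2'. apply Hmax. auto.
Qed.
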